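(* Let $M$ be a matroid on a finite set $E$ with rank function $r$ and closure operator $\mathrm{cl}$, and let $\mathcal{C}$ be a family of circuits of $M$. Let $X\subseteq E$ and let $(C_1,\dots,C_t)$ be a proper $\mathcal{C}$-sequence. Then $r(X)\le|X\cup C_{\le t}|-t$. Moreover, if equality holds, then $C_{\le t}\subseteq\mathrm{cl}(X)$ and every $e\in X\setminus C_{\le t}$ is a coloop of $M|_X$.
   Context: For a sequence of circuits $(C_1,\dots,C_t)$, write $C_{\le i}=\bigcup_{j\le i}C_j$ and $C_{\le0}=\emptyset$. The sequence is proper if $C_i\not\subseteq C_{\le i-1}$ for all $2\le i\le t$. It is a $\mathcal{C}$-sequence if every $C_i$ belongs to $\mathcal{C}$. *)

(* Defs.v *)
From mathcomp Require Import all_boot all_order.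
Set Implicit Arguments. Unset Strict Implicit. Unset Printing Implicit Defensive.

Record matroid (E : finType) := Matroid {
  indep : {set E} -> bool;
  indep0 : indep set0;
  indep_sub : forall A B : {set E}, A \subset B -> indep B -> indep A;
  indep_aug : forall A B : {set E}, indep A -> indep B -> #|A| < #|B| ->
     exists2 e, e \in B :\: A & indep (e |: A)
}.

Section MatroidDefs.
Variables (E : finType) (M : matroid E).

Definition mrank (X : {set E}) : nat :=
  \max_(I : {set E} | indep M I && (I \subset X)) #|I|.

Definition circuit (C : {set E}) : bool :=
  ~~ indep M C && [forall e in C, indep M (C :\ e)].

Definition mclosure (X : {set E}) : {set E} :=
  [set e | mrank (e |: X) == mrank X].

Definition basis_restr (X B : {set E}) : bool :=
  [&& B \subset X, indep M B & [forall e in X :\: B, ~~ indep M (e |: B)]].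

Definition coloop_restr (X : {set E}) (e : E) : bool :=
  (e \in X) && [forall B : {set E}, basis_restr X B ==> (e \in B)].

Definition union_upto (s : seq {set E}) (i : nat) : {set E} :=
  \bigcup_(C <- take i s) C.

(* proper: C_i not contained in C_{<= i-1} for 2 <= i <= t (1-indexed) *)
Definition proper_seq (s : seq {set E}) : Prop :=
  forall i, 0 < i < size s -> ~~ (nth set0 s i \subset union_upto s i).

Definition Cseq (Cs : {set {set E}}) (s : seq {set E}) : Prop :=
  forall C, C \in s -> C \in Cs.

End MatroidDefs.

(* Main.v *)
Require Import Defs.
From mathcomp Require Import all_boot all_order.
From mathcomp Require Import zify.

Section R.
Variables (E : finType) (M : matroid E).

Lemma max_wit (P : pred {set E}) (F : {set E} -> nat) (I0 : {set E}) :
  P I0 -> exists2 I, P I & \max_(I | P I) F I = F I.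
Proof.
move=> HP.
have h : 0 < #|P| by apply/card_gt0P; exists I0.
have [i Hi Heq] := eq_bigmax_cond F h.
by exists i.
Qed.

Lemma rank_wit (X : {set E}) : exists K, [/\ indep M K, K \subset X & #|K| = mrank M X].
Proof.
have [K /andP[H1 H2] H3] := @max_wit (fun I : {set E} => indep M I && (I \subset X))
   (fun I : {set E} => #|I|) set0 (introT andP (conj (indep0 M) (sub0set X))).
by exists K; split => //; rewrite /mrank H3.
Qed.

Lemma rank_ub (X I : {set E}) : indep M I -> I \subset X -> #|I| <= mrank M X.
Proof.
move=> h1 h2; rewrite /mrank.
by apply: (@leq_bigmax_cond _ (fun I : {set E} => indep M I && (I \subset X)) (fun I : {set E} => #|I|) I); rewrite h1 h2.
Qed.

Lemma rank_card (X : {set E}) : mrank M X <= #|X|.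
Proof. have [K [_ h <-]] := rank_wit X; exact: subset_leq_card. Qed.

Lemma rank_mono (A B : {set E}) : A \subset B -> mrank M A <= mrank M B.
Proof.
move=> h; have [K [h1 h2 <-]] := rank_wit A; apply: rank_ub => //.
exact: subset_trans h.
Qed.

Lemma rank_indep (I : {set E}) : indep M I -> mrank M I = #|I|.
Proof. move=> h; apply/eqP; rewrite eqn_leq rank_card rank_ub //. Qed.

Lemma extend (I Y : {set E}) : indep M I -> I \subset Y ->
  exists J : {set E}, [/\ I \subset J, J \subset Y, indep M J & #|J| = mrank M Y].
Proof.
move=> hI hIY.
have [J /and3P[h1 h2 h3] H] := @max_wit
  (fun J : {set E} => [&& indep M J, I \subset J & J \subset Y]) (fun J : {set E} => #|J|) I
  (introT and3P (And3 hI (subxx I) hIY)).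
exists J; split => //; apply/eqP; rewrite eqn_leq rank_ub //=.
rewrite leqNgt; apply/negP => hlt.
have [K [k1 k2 k3]] := rank_wit Y.
have [e /setDP[eK eJ] hind] := indep_aug h1 k1 (leq_trans hlt (eq_leq (esym k3))).
have : #|e |: J| <= #|J|.
  rewrite -H.
  apply: (@leq_bigmax_cond _ (fun J : {set E} => [&& indep M J, I \subset J & J \subset Y]) (fun J : {set E} => #|J|)).
  rewrite hind /= (subset_trans h2 (subsetUr _ _)) /= subUset h3 andbT sub1set.
  exact: (subsetP k2).
by rewrite cardsU1 eJ ltnn.
Qed.

Lemma submod (A C : {set E}) : mrank M (A :|: C) + mrank M (A :&: C) <= mrank M A + mrank M C.
Proof.
have [I [i1 i2 i3]] := rank_wit (A :&: C).
have iU : I \subset A :|: C.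
  apply: (subset_trans i2); apply/subsetP => x; rewrite !inE => /andP[-> _] //.
have [J [j1 j2 j3 j4]] := extend _ _ i1 iU.
have hA : #|J :&: A| <= mrank M A.
  by apply: rank_ub; [apply: (indep_sub _ j3); exact: subsetIl | exact: subsetIr].
have hC : #|J :&: C| <= mrank M C.
  by apply: rank_ub; [apply: (indep_sub _ j3); exact: subsetIl | exact: subsetIr].
have hAC : #|I| <= #|J :&: (A :&: C)|.
  by apply: subset_leq_card; rewrite subsetI j1 i2.
have eU : (J :&: A) :|: (J :&: C) = J.
  apply/setP => x; rewrite !inE; case hx: (x \in J) => //=.
  by move: (subsetP j2 x hx); rewrite inE.
have eI : (J :&: A) :&: (J :&: C) = J :&: (A :&: C).
  by apply/setP => x; rewrite !inE; case: (x \in J); case: (x \in A).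
have := cardsUI (J :&: A) (J :&: C); rewrite eU eI; rewrite -j4 -i3.
lia.
Qed.

Lemma nullity_step (A C : {set E}) : circuit M C -> ~~ (C \subset A) ->
  mrank M (A :|: C) + 1 + #|A| <= mrank M A + #|A :|: C|.
Proof.
move=> /andP[hdep /forallP hmin] hnot.
have hsm := submod A C.
have hC : mrank M C < #|C|.
  have [K [k1 k2 k3]] := rank_wit C.
  rewrite -k3 ltn_neqAle subset_leq_card // andbT.
  apply/negP => /eqP e.
  have ek : K = C by apply/eqP; rewrite eqEcard k2 e leqnn.
  by rewrite -ek k1 in hdep.
have [e eC eA] : exists2 e, e \in C & e \notin A.
  case/subsetPn: hnot => e h1 h2; by exists e.
have hAC : mrank M (A :&: C) = #|A :&: C|.
  apply: rank_indep; apply: (indep_sub _ (implyP (hmin e) eC)).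
  apply/subsetP => x; rewrite !inE => /andP[xA ->]; rewrite andbT.
  by apply/eqP => ex; rewrite -ex xA in eA.
have := cardsUI A C.
lia.
Qed.

Lemma null_mono (Z Y : {set E}) : Z \subset Y -> mrank M Y + #|Z| <= mrank M Z + #|Y|.
Proof.
move=> hZY.
have := submod Z (Y :\: Z).
have -> : Z :|: (Y :\: Z) = Y.
  apply/setP => x; rewrite !inE; case hx: (x \in Z) => //=.
  by rewrite (subsetP hZY x hx).
have -> : Z :&: (Y :\: Z) = set0.
  by apply/setP => x; rewrite !inE; case: (x \in Z).
have := rank_card (Y :\: Z).
have := cardsUI Z (Y :\: Z).
have -> : Z :|: (Y :\: Z) = Y.
  apply/setP => x; rewrite !inE; case hx: (x \in Z) => //=.
  by rewrite (subsetP hZY x hx).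
have -> : Z :&: (Y :\: Z) = set0.
  by apply/setP => x; rewrite !inE; case: (x \in Z).
rewrite cards0.
lia.
Qed.

Lemma circuit_nonempty (C : {set E}) : circuit M C -> C != set0.
Proof. by case/andP => h _; apply/eqP => e; rewrite e indep0 in h. Qed.

Lemma union_step (s : seq {set E}) i : i < size s ->
  union_upto s i.+1 = union_upto s i :|: nth set0 s i.
Proof. by move=> h; rewrite /union_upto (take_nth set0 h) big_rcons. Qed.

Lemma seq_bound (Cs : {set {set E}}) (HCs : forall C, C \in Cs -> circuit M C)
  (s : seq {set E}) (Hseq : Cseq Cs s) (Hproper : proper_seq s) :
  forall i, i <= size s -> mrank M (union_upto s i) + i <= #|union_upto s i|.
Proof.
elim => [|i IH] hi.
  by rewrite addn0 rank_card.
have hi' : i < size s by [].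
have IH' := IH (ltnW hi').
rewrite union_step //.
have hc : circuit M (nth set0 s i) by apply: HCs; apply: Hseq; exact: mem_nth.
have hn : ~~ (nth set0 s i \subset union_upto s i).
  clear IH IH'; case: i hc hi hi' => [|i] hc hi hi'.
    rewrite /union_upto take0 big_nil subset0; exact: circuit_nonempty.
  by apply: Hproper.
have := nullity_step _ _ hc hn.
lia.
Qed.

End R.

Theorem lemma3p2 (E : finType) (M : matroid E) (Cs : {set {set E}})
  (HCs : forall C, C \in Cs -> circuit M C)
  (X : {set E}) (s : seq {set E})
  (Hseq : Cseq Cs s) (Hproper : proper_seq s) :
  let t := size s in
  let U := union_upto s t in
  mrank M X + t <= #|X :|: U| /\
  (mrank M X + t = #|X :|: U| ->
     U \subset mclosure M X /\
     (forall e, e \in X :\: U -> coloop_restr M X e)).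
Proof.
move=> t U; subst t; subst U; set U := union_upto s (size s).
have hU := @seq_bound _ M _ HCs _ Hseq Hproper _ (leqnn (size s)).
fold U in hU.
have gen : forall Y : {set E}, mrank M Y + size s <= #|Y :|: U|.
  move=> Y.
  have h1 := @rank_mono _ M _ _ (subsetUl Y U).
  have h2 := @null_mono _ M _ _ (subsetUr Y U).
  lia.
split; first exact: gen.
move=> heq.
have hXU : mrank M (X :|: U) = mrank M X.
  have h1 := @rank_mono _ M _ _ (subsetUl X U).
  have h2 := @null_mono _ M _ _ (subsetUr X U).
  lia.
split.
  apply/subsetP => e eU; rewrite inE; apply/eqP.
  have h1 := @rank_mono _ M _ _ (subsetUr [set e] X).
  have h2 : e |: X \subset X :|: U.
    by rewrite subUset subsetUl andbT sub1set inE eU orbT.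
  have h3 := @rank_mono _ M _ _ h2.
  lia.
move=> e /setDP[eX eU]; rewrite /coloop_restr eX /=.
apply/forallP => B; apply/implyP => hB.
apply/negPn/negP => eB.
have hBX : #|B| = mrank M X.
  case/and3P: hB => b1 b2 /forallP b3.
  apply/eqP; rewrite eqn_leq rank_ub //= leqNgt; apply/negP => hlt.
  have [K [k1 k2 k3]] := @rank_wit _ M X.
  have [f /setDP[fK fB] hind] := indep_aug b2 k1 (leq_trans hlt (eq_leq (esym k3))).
  move: (implyP (b3 f)); rewrite inE fB (subsetP k2 f fK) hind; by move=> /(_ isT).
have hB' : B \subset X :\ e.
  case/and3P: hB => b1 _ _; apply/subsetP => x xB; rewrite !inE (subsetP b1 x xB) andbT.
  by apply/eqP => ex; rewrite -ex xB in eB.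
have r1 : mrank M X <= mrank M (X :\ e).
  case/and3P: hB => _ b2 _; rewrite -hBX; exact: rank_ub.
have r2 := @rank_mono _ M _ _ (subsetUl (X :\ e) U).
have r3 := gen (X :\ e).
have r4 := @null_mono _ M _ _ (subsetUr (X :\ e) U).
have hc : #|(X :\ e) :|: U| < #|X :|: U|.
  apply: proper_card; rewrite properE; apply/andP; split.
    by apply: setSU; exact: subD1set.
  apply/subsetPn; exists e; first by rewrite inE eX.
  by rewrite !inE eqxx /=; exact: eU.
have r5 := @rank_mono _ M _ _ (subsetUr (X :\ e) U).
lia.
Qed.
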